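(* Let $s\in GL(\infty,F_2)$ be the permutation matrix exchanging the basis vectors $e_1$ and $e_2$ and fixing all $e_j$, $j\ge3$. For every $g\in GL(\infty,F_2)\setminus\{I\}$ there exist $k\in\mathbb N$ and $s_1,\dots,s_k\in GL(\infty,F_2)$ such that each $s_i$ is conjugate to $s$ in $GL(\infty,F_2)$, $s_1s_2\cdots s_k=g$, and $$R(s_1-I)+R(s_2-I)+\dots+R(s_k-I)=R(g-I),$$ where $R(h-I)\subseteq F_2^\infty$ denotes the range of $h-I$.
   Context: $F_2$ is the field with two elements and $F_2^\infty=\bigoplus_{\mathbb N}F_2$ is the space of finitely supported column vectors with standard basis $e_1,e_2,\dots$. $GL(\infty,F_2)$ is the group of invertible $\mathbb N\times\mathbb N$ matrices $M$ over $F_2$ with $M_{ij}\neq\delta_{ij}$ for only finitely many $(i,j)$, acting on $F_2^\infty$ by matrix multiplication; $I$ is the identity matrix. *)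

(* Defs.v *)
(* GL(infinity, F_2) with 0-based indices: e_0, e_1, ... *)
From mathcomp Require Import all_boot all_algebra.
Set Implicit Arguments. Unset Strict Implicit. Unset Printing Implicit Defensive.
Import GRing.Theory.
Local Open Scope ring_scope.

Definition mat := nat -> nat -> 'F_2.
Definition vec := nat -> 'F_2.

Definition idm : mat := fun i j => (i == j)%:R.

(* finitely supported vectors (elements of F_2^infinity) *)
Definition finsupp (v : vec) : Prop := exists N, forall i, (N <= i)%N -> v i = 0.

Definition finitary (M : mat) : Prop :=
  exists s : seq (nat * nat), forall i j, M i j != idm i j -> (i, j) \in s.

Definition series_sum (f : nat -> 'F_2) (x : 'F_2) : Prop :=
  exists n0, forall n, (n0 <= n)%N -> \sum_(k < n) f k = x.

Definition is_mul (M N P : mat) : Prop :=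
  forall i j, series_sum (fun k => M i k * N k j) (P i j).

Definition mat_eq (M N : mat) : Prop := forall i j, M i j = N i j.

Definition GLinf (M : mat) : Prop :=
  finitary M /\
  exists Minv, finitary Minv /\ is_mul M Minv idm /\ is_mul Minv M idm.

Definition conj_GL (s t : mat) : Prop :=
  exists h hinv u, GLinf h /\ is_mul h hinv idm /\ is_mul hinv h idm /\
    is_mul h s u /\ is_mul u hinv t.

Fixpoint is_prod (l : seq mat) (P : mat) : Prop :=
  match l with
  | [::] => mat_eq P idm
  | M :: l' => exists Q, is_prod l' Q /\ is_mul M Q P
  end.

Definition in_range_sub_I (h : mat) (w : vec) : Prop :=
  exists v, finsupp v /\
    forall i, series_sum (fun k => (h i k - idm i k) * v k) (w i).

Fixpoint in_sum_ranges (l : seq mat) (w : vec) : Prop :=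
  match l with
  | [::] => forall i, w i = 0
  | M :: l' => exists u v, in_range_sub_I M u /\ in_sum_ranges l' v /\
                 forall i, w i = u i + v i
  end.

(* permutation matrix exchanging e_0 and e_1 (the paper's e_1, e_2) *)
Definition swap01 (i : nat) : nat :=
  match i with 0 => 1 | 1 => 0 | _ => i end.
Definition smat : mat := fun i j => (swap01 j == i)%:R.

(* Main.v *)
Require Import Defs.
From mathcomp Require Import all_boot all_algebra.
From Stdlib Require Import FunctionalExtensionality.
From mathcomp Require Import zify.
Set Implicit Arguments. Unset Strict Implicit. Unset Printing Implicit Defensive.
Import GRing.Theory.
Local Open Scope ring_scope.

Lemma c2F : 2%N \in [pchar 'F_2]. Proof. exact: pchar_Fp. Qed.
Lemma F2c (x : 'F_2) : x = 0 \/ x = 1.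
Proof. case: x => [[|[|k]]] Hk; [left|right|]; try by apply/val_inj. by []. Qed.
Lemma F2dd (x : 'F_2) : x + x = 0. Proof. exact: addrr_pchar2 c2F x. Qed.
Lemma F2N (x : 'F_2) : - x = x. Proof. exact: oppr_pchar2 c2F x. Qed.
Lemma mxdd a b (A : 'M['F_2]_(a,b)) : A + A = 0.
Proof. by apply/matrixP => i j; rewrite !mxE F2dd. Qed.

Section Fin.
Variable N : nat.
Local Notation n := N.+2.
Local Notation M := ('M['F_2]_n).
Local Notation V := ('cV['F_2]_n).

Definition dot (x y : V) : 'F_2 := \sum_i x i 0 * y i 0.
Lemma dotE (x y : V) : y^T *m x = (dot y x)%:M.
Proof.
apply/matrixP => i j; rewrite [i]ord1 [j]ord1 !mxE /= mulr1n.
by apply: eq_bigr => k _; rewrite mxE.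
Qed.
Lemma dotC x y : dot x y = dot y x.
Proof. by apply: eq_bigr => k _; rewrite mulrC. Qed.
Lemma dotDl x y z : dot (x + y) z = dot x z + dot y z.
Proof. rewrite /dot -big_split; apply: eq_bigr => k _; by rewrite mxE mulrDl. Qed.
Lemma dotDr x y z : dot z (x + y) = dot z x + dot z y.
Proof. by rewrite dotC dotDl !(dotC z). Qed.
Lemma dot_deltal (k : 'I_n) v : dot (delta_mx k 0) v = v k 0.
Proof.
rewrite /dot (bigD1 k) //= big1 ?addr0; first by rewrite mxE !eqxx mul1r.
by move=> i /negbTE Hi; rewrite mxE Hi mul0r.
Qed.
Lemma dot_deltar (k : 'I_n) v : dot v (delta_mx k 0) = v k 0.
Proof. by rewrite dotC dot_deltal. Qed.
Lemma deltaE (k i : 'I_n) : (delta_mx k 0 : V) i 0 = (i == k)%:R.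
Proof. by rewrite mxE andbT. Qed.

Definition tv (x y : V) : M := 1%:M + x *m y^T.

Lemma tv_inv x y : dot y x = 0 -> tv x y *m tv x y = 1%:M.
Proof.
move=> H; rewrite /tv mulmxDl !mulmxDr !mul1mx mulmx1.
rewrite -!mulmxA (mulmxA y^T) dotE H mul_scalar_mx scale0r mulmx0 addr0.
by rewrite -addrA mxdd addr0.
Qed.

Lemma tv_conj x y a b : dot y x = 0 ->
  tv x y *m tv a b *m tv x y = tv (a + dot y a *: x) (b + dot x b *: y).
Proof.
move=> H.
have Xa : tv x y *m a = a + dot y a *: x.
  by rewrite /tv mulmxDl mul1mx -mulmxA dotE mul_mx_scalar.
have bX : b^T *m tv x y = (b + dot x b *: y)^T.
  rewrite /tv mulmxDr mulmx1 mulmxA dotE mul_scalar_mx.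
  by rewrite linearD /= linearZ /= dotC.
rewrite {2}/tv mulmxDr mulmx1 mulmxDl tv_inv // -!mulmxA.
rewrite bX mulmxA Xa.
by [].
Qed.

Definition conjR (A T : M) := exists H Hi : M,
  H *m Hi = 1%:M /\ Hi *m H = 1%:M /\ H *m A *m Hi = T.
Lemma conjR_refl A : conjR A A.
Proof. by exists 1%:M, 1%:M; rewrite mulmx1 mul1mx mulmx1. Qed.
Lemma conjR_sym A T : conjR A T -> conjR T A.
Proof.
case=> H [Hi [h1 [h2 h3]]]; exists Hi, H; split=> //; split=> //.
by rewrite -h3 !mulmxA h2 mul1mx -mulmxA h2 mulmx1.
Qed.
Lemma conjR_trans A B C : conjR A B -> conjR B C -> conjR A C.
Proof.
case=> H [Hi [h1 [h2 h3]]]; case=> K [Ki [k1 [k2 k3]]].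
exists (K *m H), (Hi *m Ki); split; last split.
- by rewrite mulmxA -(mulmxA K) h1 mulmx1 k1.
- by rewrite mulmxA -(mulmxA Hi) k2 mulmx1 h2.
- by rewrite -k3 -h3 !mulmxA.
Qed.
Lemma conjR_step A a b x y : conjR A (tv a b) -> dot y x = 0 ->
  conjR A (tv (a + dot y a *: x) (b + dot x b *: y)).
Proof.
move=> h H; apply: (conjR_trans h); exists (tv x y), (tv x y).
by rewrite tv_inv // tv_conj.
Qed.

Definition ic : 'I_n := Ordinal (leqW (ltnSn N)).
Definition idd : 'I_n := ord_max.
Definition supp (v : V) := forall i : 'I_n, (N <= i)%N -> v i 0 = 0.
Definition e (k : 'I_n) : V := delta_mx k 0.
Lemma eE k i : e k i 0 = (i == k)%:R. Proof. exact: deltaE. Qed.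
Lemma addE (x y : V) i : (x + y) i 0 = x i 0 + y i 0. Proof. by rewrite mxE. Qed.
Lemma lt_ic (k : 'I_n) : (k < N)%N -> (k == ic) = false.
Proof. by move=> h; apply/negbTE/eqP => /(congr1 val) /= E; rewrite E ltnn in h. Qed.
Lemma lt_id (k : 'I_n) : (k < N)%N -> (k == idd) = false.
Proof. by move=> h; apply/negbTE/eqP => /(congr1 val) /= E; rewrite E ltnNge leqnSn in h. Qed.
Lemma id_lt (k : 'I_n) : (k < N)%N -> (idd == k) = false.
Proof. by move=> h; rewrite eq_sym lt_id. Qed.
Lemma ic_id : (ic == idd) = false.
Proof. by apply/negbTE/eqP => /(congr1 val) /= /eqP; rewrite eqn_leq ltnn andbF. Qed.
Lemma id_ic : (idd == ic) = false.
Proof. by rewrite eq_sym ic_id. Qed.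
Lemma supp_lt (a : V) q : supp a -> a q 0 = 1 -> (q < N)%N.
Proof. by move=> s h; rewrite ltnNge; apply/negP => /s; rewrite h => /eqP; rewrite oner_eq0. Qed.

Lemma conj_cd a b : supp a -> supp b -> dot b a = 0 ->
  (exists q, a q 0 = 1) -> (exists p, b p 0 = 1) -> conjR (tv (e ic) (e idd)) (tv a b).
Proof.
move=> sa sb hba [q hq] [p hp].
have qN := supp_lt sa hq; have pN := supp_lt sb hp.
have s4 := conjR_step (conjR_refl (tv (e ic) (e idd))) (x:=a) (y:=e ic)
  (etrans (dot_deltal _ _) (sa ic (leqnn N))).
rewrite /e !(dot_deltal, dot_deltar) deltaE eqxx scale1r (sa idd) ?leqnSn // scale0r addr0 in s4.
have h5 : dot (e q) (e ic) = 0 by rewrite /e dot_deltal deltaE lt_ic.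
have s5 := conjR_step s4 h5.
rewrite /e !(dotDr, dot_deltal, dot_deltar) !deltaE ic_id lt_ic // hq add0r scale1r in s5.
rewrite scale0r addr0 (addrC (delta_mx ic 0) a) -addrA mxdd addr0 in s5.
have h6 : dot (b + e idd) (e idd + e p) = 0.
  rewrite /e !(dotDl, dotDr, dot_deltal, dot_deltar) !deltaE eqxx id_lt //.
  by rewrite (sb idd) ?leqnSn // hp add0r addr0 F2dd.
have s6 := conjR_step s5 h6.
rewrite /e !(dotDl, dotDr, dot_deltal, dot_deltar) !deltaE eqxx lt_id // in s6.
rewrite hba (sa idd) ?leqnSn // addr0 scale0r addr0 addr0 scale1r addrC -addrA mxdd addr0 in s6; exact: s6.
Qed.

Definition i1 : 'I_n := Ordinal (isT : (1 < N.+2)%N).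
Definition a0 : V := e ord0 + e i1.

Lemma conj_s u f : (2 <= N)%N -> supp u -> supp f -> dot f u = 0 ->
  (exists q, u q 0 = 1) -> (exists p, f p 0 = 1) -> conjR (tv a0 a0) (tv u f).
Proof.
move=> N2 su sf h hq hp.
apply: conjR_trans (conj_cd su sf h hq hp).
apply: conjR_sym; apply: conj_cd.
- move=> i Hi; rewrite addE !eE.
  have -> : (i == ord0) = false by apply/negbTE/eqP=> E; rewrite E /= in Hi; move: Hi; case: N N2.
  have -> : (i == i1) = false.
    by apply/negbTE/eqP=> E; rewrite E /= in Hi; move: Hi N2; case: N => [|[|]].
  by rewrite addr0.
- move=> i Hi; rewrite addE !eE.
  have -> : (i == ord0) = false by apply/negbTE/eqP=> E; rewrite E /= in Hi; move: Hi; case: N N2.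
  have -> : (i == i1) = false.
    by apply/negbTE/eqP=> E; rewrite E /= in Hi; move: Hi N2; case: N => [|[|]].
  by rewrite addr0.
- rewrite /a0 /e !(dotDl, dotDr, dot_deltal, dot_deltar) !deltaE !eqxx.
  have -> : (ord0 == i1) = false by [].
  have -> : (i1 == ord0) = false by [].
  by rewrite addr0 add0r F2dd.
- exists (@ord0 N.+1); rewrite addE !eE eqxx.
  have -> : (ord0 == i1) = false by [].
  by rewrite addr0.
- exists (@ord0 N.+1); rewrite addE !eE eqxx.
  have -> : (ord0 == i1) = false by [].
  by rewrite addr0.
Qed.

Definition rangeF (A : M) (w : V) := exists v : V, w = (A - 1%:M) *m v.
Fixpoint sumRF (l : seq M) (w : V) : Prop :=
  match l with
  | [::] => w = 0
  | A :: l' => exists x y, rangeF A x /\ sumRF l' y /\ w = x + y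
  end.
Definition bnd (A : M) := forall i j : 'I_n, (N <= i)%N || (N <= j)%N -> A i j = (i == j)%:R.
Definition fixedb (A : M) k := [forall i, A i k == (i == k)%:R].
Definition nf (A : M) := [set k | ~~ fixedb A k].
Definition good (p : V * V) := supp p.1 /\ supp p.2 /\ dot p.2 p.1 = 0 /\
  (exists q, p.1 q 0 = 1) /\ (exists q, p.2 q 0 = 1).
Definition tvp (p : V * V) := tv p.1 p.2.

Lemma fixedP (A : M) (k : 'I_n) : reflect (forall i, A i k = (i==k)%:R) (fixedb A k).
Proof. by apply: (iffP forallP) => h i; [exact/eqP | rewrite h]. Qed.
Lemma nfP (A : M) (k : 'I_n) : k \notin nf A -> forall i, A i k = (i==k)%:R.
Proof. by rewrite inE negbK => /fixedP. Qed.
Lemma nf_bnd (A : M) (k : 'I_n) : bnd A -> (N <= k)%N -> k \notin nf A.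
Proof. by move=> b h; rewrite inE negbK; apply/fixedP => i; apply: b; rewrite h orbT. Qed.

Lemma tvE x y (A : M) i k : (tv x y *m A) i k = A i k + x i 0 * \sum_l y l 0 * A l k.
Proof.
rewrite /tv mulmxDl mul1mx mxE; congr (_ + _).
rewrite -mulmxA mxE big_ord1 mxE; congr (_ * _); apply: eq_bigr => l _; by rewrite mxE.
Qed.

Lemma sum_delta (g : 'I_n -> 'F_2) k : \sum_l g l * (l == k)%:R = g k.
Proof.
rewrite (bigD1 k) //= eqxx mulr1 big1 ?addr0 // => l /negbTE ->; by rewrite mulr0.
Qed.

Lemma uE (A : M) j i : col j (A - 1%:M) i 0 = A i j - (i == j)%:R.
Proof. by rewrite !mxE. Qed.

Lemma find_f (A : M) j : A \in unitmx -> j \in nf A -> exists f : V, f j 0 = 1 /\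
  dot f (col j (A - 1%:M)) = 0 /\ (forall k, k \notin nf A -> f k 0 = 0).
Proof.
move=> Au jn.
have kj : forall k, k \notin nf A -> (k == j) = false.
  by move=> k kn; apply/negbTE/eqP => E; rewrite E jn in kn.
case: (F2c (A j j)) => Ajj; last first.
  exists (e j); split; first by rewrite eE eqxx.
  split; first by rewrite /e dot_deltal uE Ajj eqxx subrr.
  by move=> k kn; rewrite eE kj.
case: (boolP [exists m, (m != j) && (m \in nf A) && (A m j == 1)]).
  move/existsP => [m /andP [/andP [mj mn] /eqP Amj]].
  exists (e j + e m); split; first by rewrite addE !eE eqxx eq_sym (negbTE mj) addr0.
  split; first by rewrite /e dotDl !dot_deltal !uE Ajj Amj eqxx (negbTE mj) sub0r subr0 F2N F2dd.
  move=> k kn; rewrite addE !eE kj //.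
  have -> : (k == m) = false by apply/negbTE/eqP => E; rewrite E mn in kn.
  by rewrite addr0.
move/existsPn => hn; exfalso.
have Hx : A *m col j A = col j A.
  apply/matrixP => i z; rewrite [z]ord1 !mxE.
  transitivity (\sum_l A l j * (l == i)%:R); last by rewrite sum_delta.
  apply: eq_bigr => l _; rewrite mxE.
  case: (F2c (A l j)) => h; first by rewrite h !mul0r mulr0.
  have lj : l != j by apply/eqP => E; rewrite E Ajj in h; move: h => /eqP; rewrite eq_sym oner_eq0.
  have := hn l; rewrite lj h eqxx andbT /= => /nfP ->.
  by rewrite mulrC eq_sym.
have z0 : A *m (col j A - e j) = 0 by rewrite mulmxBr Hx /e -colE subrr.
have := mulKmx Au (col j A - e j); rewrite z0 mulmx0 => /esym/eqP; rewrite subr_eq0 => /eqP.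
move=> /(congr1 (fun X : V => X j 0)); rewrite mxE eE eqxx Ajj => /eqP; by rewrite eq_sym oner_eq0.
Qed.

Lemma base_case (A : M) : nf A = set0 -> exists Ts : seq (V * V),
  (forall p, p \in Ts -> good p) /\ A = foldr mulmx 1%:M (map tvp Ts) /\
  (forall w, sumRF (map tvp Ts) w <-> rangeF A w).
Proof.
move=> E.
have -> : A = 1%:M.
  apply/matrixP => i k; rewrite mxE; apply: nfP; by rewrite E inE.
exists [::]; split=> //; split=> // w /=; rewrite /rangeF subrr.
by split=> [->|[v ->]]; [exists 0; rewrite mulmx0 | rewrite mul0mx].
Qed.

Lemma core m : forall A : M, A \in unitmx -> bnd A -> (#|nf A| <= m)%N ->
  exists Ts : seq (V * V),
  (forall p, p \in Ts -> good p) /\ A = foldr mulmx 1%:M (map tvp Ts) /\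
  (forall w, sumRF (map tvp Ts) w <-> rangeF A w).
Proof.
elim: m => [|m IH] A Au Ab Hc.
  by apply: base_case; apply/eqP; rewrite -cards_eq0 -leqn0.
case: (set_0Vmem (nf A)) => [E|[j jn]]; first exact: base_case.
have [f [fj [hfu fk]]] := find_f Au jn.
set u := col j (A - 1%:M) in hfu.
set t := tv u f.
set A' := t *m A.
have htt : t *m t = 1%:M by apply: tv_inv.
have hA : A = t *m A' by rewrite /A' mulmxA htt mul1mx.
have A'u : A' \in unitmx by rewrite unitmx_mul Au andbT; case: (mulmx1_unit htt).
have su : supp u by move=> i Hi; rewrite uE Ab ?Hi // subrr.
have sf : supp f by move=> i Hi; apply: fk; apply: nf_bnd.
have sumfix : forall k, k \notin nf A -> \sum_l f l 0 * A l k = 0.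
  move=> k kn; rewrite (eq_bigr (fun l => f l 0 * (l == k)%:R)) ?sum_delta ?fk //.
  by move=> l _; rewrite (nfP kn).
have sumj : \sum_l f l 0 * A l j = 1.
  rewrite (eq_bigr (fun l => f l 0 * u l 0 + f l 0 * (l == j)%:R)); last first.
    by move=> l _; rewrite -mulrDr uE subrK.
  by rewrite big_split /= sum_delta -/(dot f u) hfu add0r.
have A'E : forall i k, A' i k = A i k + u i 0 * \sum_l f l 0 * A l k by move=> i k; apply: tvE.
have A'b : bnd A'.
  move=> i k /orP [Hi|Hk]; rewrite A'E.
    by rewrite su // mul0r addr0; apply: Ab; rewrite Hi.
  by rewrite sumfix ?mulr0 ?addr0; [apply: Ab; rewrite Hk orbT | apply: nf_bnd].
have sub : nf A' \subset nf A :\ j.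
  apply/subsetP => k; apply: contraTT; rewrite in_setD1 negb_and negbK => /orP [/eqP ->|kn].
    rewrite inE negbK; apply/fixedP => i; rewrite A'E sumj mulr1 uE addrA F2dd.
    by rewrite sub0r F2N.
  rewrite inE negbK; apply/fixedP => i; rewrite A'E sumfix // mulr0 addr0.
  exact: nfP.
have Hc' : (#|nf A'| <= m)%N.
  have := subset_leq_card sub; have := cardsD1 j (nf A); rewrite jn add1n.
  move=> E1 E2; rewrite E1 ltnS in Hc; exact: leq_trans E2 Hc.
have [Ts' [gTs' [pTs' rTs']]] := IH A' A'u A'b Hc'.
exists ((u, f) :: Ts'); split; last split.
- move=> p; rewrite inE => /orP [/eqP ->|]; last exact: gTs'.
  split=> //; split=> //; split=> //; split; last by exists j.
  have /forallPn [i hi] : ~~ fixedb A j by rewrite inE in jn.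
  exists i; case: (F2c (u i 0)) => // h; exfalso; move: hi; rewrite -subr_eq0 -uE.
  by rewrite -/u h eqxx.
- by rewrite /= -pTs'.
have Ht1 : t - 1%:M = (A - 1%:M) *m e j *m f^T.
  by rewrite /t /tv addrC addKr /e -colE.
have HA'1 : A' - 1%:M = (t - 1%:M) *m A + (A - 1%:M).
  by rewrite mulmxBl mul1mx addrA subrK.
move=> w /=; split.
  move=> [x [y [[z ->] [hy ->]]]]; move/rTs': hy => [v ->].
  exists (e j *m (f^T *m z) + e j *m (f^T *m (A *m v)) + v).
  rewrite !mulmxDr HA'1 mulmxDl Ht1 -!mulmxA addrA.
  done.
move=> [v ->].
exists ((t - 1%:M) *m (A' *m v)), ((A' - 1%:M) *m v); split; first by exists (A' *m v).
split; first by apply/rTs'; exists v.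
by rewrite !mulmxBl !mul1mx mulmxA -hA addrA subrK.
Qed.

Lemma ss_uniq (F : nat -> 'F_2) x y : series_sum F x -> series_sum F y -> x = y.
Proof.
move=> [n0 h0] [n1 h1]; rewrite -(h0 (maxn n0 n1)) ?leq_maxl //.
by rewrite h1 // leq_maxr.
Qed.
Lemma ss_fin (F : nat -> 'F_2) m : (forall k, (m <= k)%N -> F k = 0) ->
  series_sum F (\sum_(k < m) F k).
Proof.
move=> h; exists m => n0 Hn; rewrite -(subnKC Hn).
elim: (n0 - m)%N => [|d IHd]; first by rewrite addn0.
by rewrite addnS big_ord_recr /= IHd h ?addr0 // leq_addr.
Qed.
Lemma ss_zero (F : nat -> 'F_2) : (forall k, F k = 0) -> series_sum F 0.
Proof. by move=> h; have := @ss_fin F 0 (fun k _ => h k); rewrite big_ord0. Qed.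
Lemma idm0 i j : i != j -> idm i j = 0.
Proof. by rewrite /idm => /negbTE ->. Qed.
Lemma inord_eq (i : nat) (k : 'I_n) : (i < n)%N -> (inord i == k) = (i == k).
Proof. by move=> h; rewrite -(inj_eq val_inj) /= inordK. Qed.

Definition frommx (A : M) : mat := fun i j =>
  if (i < n)%N && (j < n)%N then A (inord i) (inord j) else idm i j.

Lemma fm_mul (A C : M) : is_mul (frommx A) (frommx C) (frommx (A *m C)).
Proof.
move=> i j; rewrite {3}/frommx; case: (ltnP i n) => hi /=.
- case: (ltnP j n) => hj /=.
  + have -> : (A *m C) (inord i) (inord j) =
       \sum_(k < n) frommx A i k * frommx C k j.
      rewrite mxE; apply: eq_bigr => k _; by rewrite /frommx hi hj ltn_ord /= inord_val.
    apply: ss_fin => k hk; rewrite /frommx hi /= ltnNge hk /= idm0 ?mul0r //.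
    by apply/negP => /eqP E; rewrite E ltnNge hk in hi.
  + have -> : idm i j = \sum_(k < 0) frommx A i k * frommx C k j.
      by rewrite big_ord0 idm0 //; apply/negP => /eqP E; rewrite E ltnNge hj in hi.
    apply: ss_fin => k _; rewrite /frommx hi /=.
    case: (ltnP k n) => hk /=.
      by rewrite ltnNge hj /= idm0 ?mulr0 //; apply/negP => /eqP E; rewrite E ltnNge hj in hk.
    by rewrite idm0 ?mul0r //; apply/negP => /eqP E; rewrite E ltnNge hk in hi.
- have -> : idm i j = \sum_(k < i.+1) frommx A i k * frommx C k j.
    rewrite big_ord_recr /= big1 ?add0r.
      by rewrite /frommx ltnNge hi /= /idm eqxx mul1r.
    move=> k _; rewrite /frommx ltnNge hi /= idm0 ?mul0r //.
    by apply/negP => /eqP E; have := ltn_ord k; rewrite -E ltnn.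
  apply: ss_fin => k hk; rewrite /frommx ltnNge hi /= idm0 ?mul0r //.
  by apply/negP => /eqP E; rewrite E ltnn in hk.
Qed.

Lemma fm1 : frommx 1%:M = idm.
Proof.
apply: functional_extensionality => i; apply: functional_extensionality => j.
rewrite /frommx; case: ifP => // /andP [hi hj]; by rewrite mxE inord_eq // inordK.
Qed.

Lemma fm_fin A : finitary (frommx A).
Proof.
exists [seq (i, j) | i <- iota 0 n, j <- iota 0 n] => i j.
rewrite /frommx; case: ifP => [/andP [hi hj] _|]; last by rewrite eqxx.
by apply: allpairs_f; rewrite mem_iota.
Qed.

Lemma fm_bnd (g : mat) : (forall i j, (N <= i)%N || (N <= j)%N -> g i j = idm i j) ->
  g = frommx (\matrix_(i, j) g i j).
Proof.
move=> h; apply: functional_extensionality => i; apply: functional_extensionality => j.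
rewrite /frommx; case: ifP => [/andP [hi hj]|]; first by rewrite mxE !inordK.
move=> /negbT; rewrite negb_and -!leqNgt => hij; apply: h.
by case/orP: hij => H; apply/orP; [left|right]; apply: leq_trans H; rewrite leqW.
Qed.

Lemma fm_sub (A : M) i k : frommx A i k - idm i k =
  if (i < n)%N && (k < n)%N then (A - 1%:M) (inord i) (inord k) else 0.
Proof.
rewrite /frommx; case: ifP => [/andP [hi hk]|]; last by rewrite subrr.
by rewrite !mxE inord_eq // inordK.
Qed.

Definition colv (w : vec) : V := \col_i w i.

Lemma fm_range (A : M) w : in_range_sub_I (frommx A) w <->
  (forall i, (n <= i)%N -> w i = 0) /\ rangeF A (colv w).
Proof.
split.
  move=> [v [_ hv]]; split.
    move=> i hi; apply: (ss_uniq (hv i)).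
    have -> : (0 : 'F_2) = \sum_(k < 0) (frommx A i k - idm i k) * v k by rewrite big_ord0.
    by apply: ss_fin => k _; rewrite fm_sub ltnNge hi /= mul0r.
  exists (\col_k v k); apply/matrixP => i z; rewrite [z]ord1 !mxE.
  apply: (ss_uniq (hv i)).
  have -> : \sum_j (A - 1%:M) i j * (\col_k v k) j 0 = \sum_(k < n) (frommx A i k - idm i k) * v k.
    by apply: eq_bigr => k _; rewrite fm_sub !ltn_ord /= !inord_val mxE.
  by apply: ss_fin => k hk; rewrite fm_sub (ltnNge k) hk andbF mul0r.
move=> [hz [z hz2]].
exists (fun k => if (k < n)%N then z (inord k) 0 else 0); split.
  by exists n => i hi; rewrite ltnNge hi.
move=> i; case: (ltnP i n) => hi.
  have -> : w i = \sum_(k < n) (frommx A i k - idm i k) * (if (k < n)%N then z (inord k) 0 else 0).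
    have := congr1 (fun X : V => X (inord i) 0) hz2; rewrite !mxE inordK // => ->.
    by apply: eq_bigr => k _; rewrite fm_sub hi !ltn_ord /= inord_val.
  by apply: ss_fin => k hk; rewrite fm_sub (ltnNge k) hk andbF mul0r.
rewrite hz //.
by apply: ss_zero => k; rewrite fm_sub ltnNge hi /= mul0r.
Qed.

Definition ofcol (x : V) : vec := fun i => if (i < n)%N then x (inord i) 0 else 0.
Lemma colv_of x : colv (ofcol x) = x.
Proof. by apply/matrixP => i z; rewrite [z]ord1 mxE /ofcol ltn_ord inord_val. Qed.
Lemma colvE w (i : 'I_n) : colv w i 0 = w i.
Proof. by rewrite mxE. Qed.

Lemma fm_sums (Ms : seq M) w : in_sum_ranges (map frommx Ms) w <->
  (forall i, (n <= i)%N -> w i = 0) /\ sumRF Ms (colv w).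
Proof.
elim: Ms w => [|A Ms IH] w /=.
  split; first by move=> h; split=> //; apply/matrixP => i z; rewrite mxE h mxE.
  move=> [hz hc] i; case: (ltnP i n) => hi; last exact: hz.
  by have := congr1 (fun X : V => X (inord i) 0) hc; rewrite !mxE inordK.
split.
  move=> [x [y [hx [hy hw]]]]; move/fm_range: hx => [hx0 hxr]; move/IH: hy => [hy0 hyr].
  split; first by move=> i hi; rewrite hw hx0 ?hy0 ?addr0.
  exists (colv x), (colv y); split=> //; split=> //.
  by apply/matrixP => i z; rewrite [z]ord1 !mxE hw.
move=> [hw0 [x [y [hx [hy E]]]]].
exists (ofcol x), (ofcol y); split.
  by apply/fm_range; rewrite colv_of; split=> // i hi; rewrite /ofcol ltnNge hi.
split.
  by apply/IH; rewrite colv_of; split=> // i hi; rewrite /ofcol ltnNge hi.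
move=> i; rewrite /ofcol; case: (ltnP i n) => hi; last by rewrite hw0 ?addr0.
by have := congr1 (fun X : V => X (inord i) 0) E; rewrite !mxE inordK.
Qed.

Lemma fm_prod (Ms : seq M) : is_prod (map frommx Ms) (frommx (foldr mulmx 1%:M Ms)).
Proof.
elim: Ms => [|A Ms IH] /=; first by rewrite fm1.
by exists (frommx (foldr mulmx 1%:M Ms)); split=> //; apply: fm_mul.
Qed.

Lemma tvEntry x y i j : tv x y i j = (i == j)%:R + x i 0 * y j 0.
Proof. by rewrite /tv !mxE big_ord1 mxE. Qed.

Lemma smatE : (2 <= N)%N -> frommx (tv a0 a0) = smat.
Proof.
move=> N2; apply: functional_extensionality => i; apply: functional_extensionality => j.
rewrite /frommx /smat; case: ifP.
  move=> /andP [hi hj]; rewrite tvEntry /a0 !addE !eE !inord_eq // inordK //=.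
  case: i {hi} => [|[|i]]; case: j {hj} => [|[|j]] /=.
  all: try by rewrite ?mulr0n ?mulr1n ?addr0 ?add0r ?mulr0 ?mul0r ?mulr1 ?F2dd.
  all: try by rewrite ?mulr0n ?mulr1n ?addr0 ?add0r ?mulr0 ?mul0r ?mulr1 ?F2dd eq_sym.
  all: idtac.
  rewrite eq_sym; case: (_ == _); by apply/val_inj.
move=> /negbT; rewrite negb_and -!leqNgt /idm => h.
case: j h => [|[|j]] h /=.
- have hi : (n <= i)%N by case/orP: h.
  by case: i hi {h} => [|[|i]].
- have hi : (n <= i)%N by case/orP: h.
  by case: i hi {h} => [|[|i]].
- by rewrite eq_sym.
Qed.

Lemma fm_inv (H Hi : M) : H *m Hi = 1%:M -> is_mul (frommx H) (frommx Hi) idm.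
Proof. by move=> h; rewrite -fm1 -h; apply: fm_mul. Qed.

Lemma elem p : (2 <= N)%N -> good p ->
  GLinf (frommx (tvp p)) /\ conj_GL smat (frommx (tvp p)).
Proof.
case: p => u f N2 [su [sf [h [hq hp]]]]; rewrite /tvp /=.
have tt := tv_inv h.
split; first by split; [apply: fm_fin | exists (frommx (tv u f)); split; [apply: fm_fin | split; apply: fm_inv]].
have [H [Hi [h1 [h2 h3]]]] := conj_s N2 su sf h hq hp.
exists (frommx H), (frommx Hi), (frommx (H *m tv a0 a0)).
split; first by split; [apply: fm_fin | exists (frommx Hi); split; [apply: fm_fin | split; apply: fm_inv]].
split; first exact: fm_inv.
split; first exact: fm_inv.
split; first by rewrite -smatE //; apply: fm_mul.
by rewrite -h3; apply: fm_mul.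
Qed.

End Fin.

Fixpoint bnds (s : seq (nat * nat)) : nat :=
  if s is p :: s' then maxn (maxn p.1 p.2).+1 (bnds s') else 0%N.
Lemma bnds_lt s p : p \in s -> ((p.1 < bnds s) && (p.2 < bnds s))%N.
Proof.
elim: s => // q s IH; rewrite inE => /orP [/eqP ->|/IH /andP [h1 h2]]; rewrite /=; apply/andP; split; rewrite leq_max ?ltnS ?leq_max ?leqnn ?orbT ?h1 ?h2 ?orbT //.
Qed.
Lemma fin_bound (Mx : mat) : finitary Mx ->
  exists N, forall i j, (N <= i)%N || (N <= j)%N -> Mx i j = idm i j.
Proof.
case=> s hs; exists (bnds s) => i j h.
case: (eqVneq (Mx i j) (idm i j)) => // /hs /bnds_lt /= /andP [h1 h2]; exfalso.
case/orP: h; lia.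
Qed.

Theorem lemma4p5 (g : mat) :
  GLinf g -> ~ mat_eq g idm ->
  exists l : seq mat,
    (forall i, (i < size l)%N ->
       GLinf (nth idm l i) /\ conj_GL smat (nth idm l i)) /\
    is_prod l g /\
    (forall w : vec, in_sum_ranges l w <-> in_range_sub_I g w).
Proof.
move=> [fg [gi [fgi [m1 m2]]]] _.
have [N1 b1] := fin_bound fg; have [N2 b2] := fin_bound fgi.
pose N := maxn 2 (maxn N1 N2).
have bg : forall i j, (N <= i)%N || (N <= j)%N -> g i j = idm i j.
  by move=> i j h; apply: b1; case/orP: h => h; apply/orP; [left|right]; lia.
have bgi : forall i j, (N <= i)%N || (N <= j)%N -> gi i j = idm i j.
  by move=> i j h; apply: b2; case/orP: h => h; apply/orP; [left|right]; lia.
have hg := fm_bnd bg; have hgi := fm_bnd bgi.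
move: hg hgi m1.
set G := \matrix_(i, j) g i j; set Gi := \matrix_(i, j) gi i j => hg hgi m1.
rewrite hg hgi in m1.
have GG : G *m Gi = 1%:M.
  apply/matrixP => i j; have := ss_uniq (m1 i j) (fm_mul G Gi i j).
  by rewrite /frommx !ltn_ord /= !inord_val mxE => <-; rewrite mxE.
have Gu : G \in unitmx by case: (mulmx1_unit GG).
have Gb : bnd G by move=> i j h; rewrite mxE bg.
have [Ts [gTs [pTs rTs]]] := @core N #|nf G| G Gu Gb (leqnn _).
exists (map (@frommx N) (map (@tvp N) Ts)); split; last split.
- move=> k; rewrite !size_map => hk; rewrite (nth_map (0 : 'M__)) ?size_map //.
  rewrite (nth_map ((0, 0) : 'cV__ * 'cV__)) //.
  by apply: elem; [lia | apply: gTs; apply: mem_nth].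
- by rewrite hg pTs; apply: fm_prod.
move=> w; rewrite hg fm_sums fm_range.
by split; case=> h1 h2; split=> //; apply/rTs.
Qed.
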